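(* Let $h,v$ be permutations of $\Lambda=\{1,\dots,d\}$ such that $\langle h,v\rangle$ acts transitively on $\Lambda$, and let $M\ge0$ be an integer. Then the combinatorial data $(\pi_0,\pi_1^M)$ is irreducible.
   Context: $\pi_0,\pi_1^M:\Lambda\times\{L,R\}\to\{1,\dots,2d\}$ are the bijections $\pi_0(\lambda,L)=2\lambda-1$, $\pi_0(\lambda,R)=2\lambda$, $\pi_1^M(\lambda,L)=2vh^M(\lambda)$, $\pi_1^M(\lambda,R)=2vh^{M+1}(\lambda)-1$. A pair of bijections $(\pi_0,\pi_1)$ from a $k$-element set $\mathcal{A}$ to $\{1,\dots,k\}$ is irreducible if there is no $1\le j<k$ with $\pi_0^{-1}(\{1,\dots,j\})=\pi_1^{-1}(\{1,\dots,j\})$. *)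

(* Defs.v *)
From HB Require Import structures.
From mathcomp Require Import all_boot all_fingroup.
Set Implicit Arguments. Unset Strict Implicit. Unset Printing Implicit Defensive.

(* The two sides L, R of an interval *)
Inductive side := L | R.
Definition side_to_bool (s : side) : bool := if s is R then true else false.
Definition bool_to_side (b : bool) : side := if b then R else L.
Lemma side_boolK : cancel side_to_bool bool_to_side. Proof. by case. Qed.
HB.instance Definition _ := Finite.copy side (can_type side_boolK).

Definition irreducible (A : finType) (p0 p1 : A -> nat) : Prop :=
  forall j : nat, 1 <= j < #|A| ->
    [set a | p0 a <= j] != [set a | p1 a <= j].

(* Lambda = {1,...,d} is represented by 'I_d; the ordinal i stands for i+1. *)
Definition pi0 (d : nat) (x : 'I_d * side) : nat :=
  let: (l, s) := x in
  match s with L => 2 * l.+1 - 1 | R => 2 * l.+1 end.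

Definition pi1 (d : nat) (h v : {perm 'I_d}) (M : nat) (x : 'I_d * side) : nat :=
  let: (l, s) := x in
  match s with
  | L => 2 * (v ((h ^+ M)%g l)).+1
  | R => 2 * (v ((h ^+ M.+1)%g l)).+1 - 1
  end.

(* Main.v *)
Require Import Defs.
From mathcomp Require Import all_boot all_fingroup.
From mathcomp Require Import zify.

Lemma card_side : #|{: side}| = 2.
Proof. rewrite -card_bool; apply: bij_eq_card; exists bool_to_side; [exact: side_boolK | by case]. Qed.

Lemma card_A d : #|{: 'I_d * side}| = (2 * d)%N.
Proof. by rewrite card_prod card_ord card_side mulnC. Qed.

Theorem corollary5p3 (d : nat) (h v : {perm 'I_d}) (M : nat) :
  [transitive <<[set h; v]>>, on [set: 'I_d] | 'P] ->
  irreducible (pi0 (d:=d)) (pi1 h v M).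
Proof.
move=> T j /andP[j1 j2]; rewrite card_A in j2.
apply/negP => /eqP E.
have mem x : (pi0 x <= j) = (pi1 h v M x <= j).
  by move/setP: E => /(_ x); rewrite !inE.
set p1 := (h ^+ M * v)%g; set p2 := (h ^+ M.+1 * v)%g.
have [oj|ej] := boolP (odd j).
-
  set k := j./2.
  have jk : j = (2 * k).+1 by rewrite /k -[in LHS](odd_double_half j) oj -muln2 mulnC.
  have kd : k < d by lia.
  have H l : (p1 l < k) = (l <= k).
    have := mem (l, L); rewrite /= /p1 /p2 !permM; lia.
  pose B := [set l : 'I_d | l <= k]; pose C := [set l : 'I_d | l < k].
  have sub : [set p1 x | x in B] \subset C.
    apply/subsetP => y /imsetP[x]; rewrite !inE => xB ->; by rewrite H.
  have pr : C \proper B.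
    apply/properP; split.
      by apply/subsetP => x; rewrite !inE; apply: ltnW.
    by exists (Ordinal kd); rewrite !inE /= ?leqnn ?ltnn.
  have := subset_leq_card sub; rewrite card_imset; last exact: perm_inj.
  by move/(leq_trans (proper_card pr)); rewrite ltnn.
-
  set k := j./2.
  have jk : j = (2 * k) by rewrite /k -[in LHS](odd_double_half j) (negbTE ej) -muln2 mulnC.
  have kd : k < d by lia.
  have k0 : 0 < k by lia.
  pose A := [set l : 'I_d | l < k].
  have H1 : p1 \in 'N(A | 'P)%g.
    apply/astabsP => l; rewrite !inE /= /aperm /p1 permM.
    have := mem (l, L); rewrite /=; set x := v _; set y := nat_of_ord l; lia.
  have H2 : p2 \in 'N(A | 'P)%g.
    apply/astabsP => l; rewrite !inE /= /aperm /p2 permM.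
    have := mem (l, R); rewrite /=; set x := v _; set y := nat_of_ord l; lia.
  have hN : h \in 'N(A | 'P)%g.
    have -> : h = (p2 * p1^-1)%g.
      by rewrite /p1 /p2 invMg mulgA mulgK expgS mulgK.
    by rewrite groupM ?groupV.
  have vN : v \in 'N(A | 'P)%g.
    have -> : v = ((h ^+ M)^-1 * p1)%g by rewrite /p1 mulKg.
    by rewrite groupM ?groupV ?groupX.
  have G : (<<[set h; v]>> \subset 'N(A | 'P))%g.
    by rewrite gen_subG; apply/subsetP => x; rewrite in_set2 => /orP[]/eqP->.
  have o0 : 0 < d by lia.
  have := atransP T (Ordinal o0) (in_setT _).
  move/setP/(_ (Ordinal kd)); rewrite in_setT => /orbitP[g gG geq].
  have := (subsetP G) g gG => /astabsP/(_ (Ordinal o0)).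
  by rewrite geq !inE /= ltnn k0.
Qed.
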